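(* Let $E$ be a complex vector space of dimension $2$, let $f,g$ be linear endomorphisms of $E$, and let $\mathcal{U}=\{u\in\mathbb{C}\setminus\{0\} : e^u=1+u\}$. Then the following are equivalent: (i) $f\circ g\neq g\circ f$ and for every $t\in\mathbb{C}$, $\exp(tf+g)=\exp(tf)\circ\exp(g)$; (ii) there exist $\sigma,\tau\in\mathbb{C}$ such that $\tilde f=f-\sigma\,\mathrm{id}$ and $\tilde g=g-\tau\,\mathrm{id}$ satisfy $\tilde f\neq 0$, $\tilde f^2=0$, $\tilde f\circ\tilde g=0$ and $\mathrm{tr}(\tilde g)\in\mathcal{U}$.
   Context: $\mathrm{id}$ is the identity of $E$, $\mathrm{tr}$ the trace, and $\exp(u)=\sum_{k\ge0}u^k/k!$ for a linear endomorphism $u$. *)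

(* Defs.v *)
From HB Require Import structures.
From mathcomp Require Import all_boot all_order all_algebra.
From mathcomp Require Export complex.
From mathcomp Require Import all_classical all_reals all_analysis.
Import Order.TTheory GRing.Theory Num.Theory.
Import numFieldNormedType.Exports.
Local Open Scope ring_scope.
Local Open Scope complex_scope.

Set Implicit Arguments.
Unset Strict Implicit.
Unset Printing Implicit Defensive.

Definition cexp (R : realType) (u : R[i]) : R[i] :=
  limn (series (fun k => ((k`!%:R)^-1 * u ^+ k : R[i]^o))).

(* exp(A) = sum_{k>=0} A^k / k!  for a linear endomorphism of E = C^2,
   represented by its 2x2 complex matrix (limit in the normed space 'M_2). *)
Definition mexp (R : realType) (A : 'M[R[i]]_2) : 'M[R[i]]_2 :=
  limn (series (fun k => (k`!%:R)^-1 *: A ^+ k)).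

Definition Uset (R : realType) (u : R[i]) : Prop :=
  u != 0 /\ cexp u = 1 + u.

(* Main.v *)
Require Import Defs.
From HB Require Import structures.
From mathcomp Require Import all_boot all_order all_algebra.
From mathcomp Require Import complex.
From mathcomp Require Import all_classical all_reals all_analysis.
From mathcomp Require Import ring lra.
Import Order.TTheory GRing.Theory Num.Theory.
Import numFieldNormedType.Exports.
Local Open Scope classical_set_scope.
Local Open Scope ring_scope.
Local Open Scope complex_scope.

Section ExpId.
Variable K : numFieldType.

Definition Ep (n : nat) (x : K) := \sum_(0 <= k < n) (k`!%:R)^-1 * x ^+ k.
Definition tte (a b : K) (i j : nat) := (i`!%:R)^-1 * a ^+ i * ((j`!%:R)^-1 * b ^+ j).

Lemma fact_neq0 k : (k`!%:R : K) != 0.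
Proof. by rewrite pnatr_eq0 -lt0n fact_gt0. Qed.

Lemma diagE (a b : K) n :
  (n`!%:R)^-1 * (a + b) ^+ n = \sum_(0 <= i < n.+1) tte a b i (n - i).
Proof.
rewrite big_nat_rev /= big_mkord exprDn big_distrr /=.
apply: eq_bigr => [[i /=]]; rewrite ltnS => lein _.
rewrite add0n subSS subKn // /tte.
have := bin_fact lein => /(congr1 (fun m => m%:R : K)); rewrite natrM => E.
rewrite mulrnAr -mulr_natl mulrA.
have -> : 'C(n, i)%:R / n`!%:R = ((n - i)`!%:R)^-1 * (i`!%:R)^-1 :> K.
  rewrite -E natrM.
  have h1 := fact_neq0 i; have h2 := fact_neq0 (n - i).
  have h3 : ('C(n, i)%:R : K) != 0 by rewrite pnatr_eq0 -lt0n bin_gt0.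
  by field; rewrite h1 h2 h3.
by rewrite -!mulrA; congr (_ * _); rewrite mulrCA.
Qed.

Lemma triE (a b : K) n :
  Ep n (a + b) = \sum_(0 <= i < n) \sum_(0 <= j < n - i) tte a b i j.
Proof.
elim: n => [|n IH]; first by rewrite /Ep !big_geq.
rewrite /Ep big_nat_recr //= -/(Ep n (a + b)) IH diagE.
rewrite [in RHS]big_nat_recr //= subSnn big_nat1.
rewrite [X in _ + X]big_nat_recr //= subnn addrA; congr (_ + _).
rewrite -big_split /=; apply: eq_big_nat => i /andP[_ lin].
by rewrite subSn ?(ltnW lin) // big_nat_recr.
Qed.

Lemma prodE (a b : K) n :
  Ep n a * Ep n b = \sum_(0 <= i < n) \sum_(0 <= j < n) tte a b i j.
Proof.
rewrite /Ep big_distrl /=; apply: eq_bigr => i _.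
by rewrite big_distrr /=.
Qed.

Lemma diffE (a b : K) n :
  Ep n a * Ep n b - Ep n (a + b) =
  \sum_(0 <= i < n) \sum_(n - i <= j < n) tte a b i j.
Proof.
rewrite prodE triE -sumrB; apply: eq_big_nat => i /andP[_ lin].
rewrite (@big_cat_nat _ _ _ (n - i) 0 n) ?leq_subr //=.
by rewrite addrAC subrr add0r.
Qed.

Lemma diff_norm (a b : K) n :
  `|Ep n a * Ep n b - Ep n (a + b)| <=
  Ep n `|a| * Ep n `|b| - Ep n (`|a| + `|b|).
Proof.
rewrite !diffE; apply: le_trans (ler_norm_sum _ _ _) _.
apply: ler_sum => i _; apply: le_trans (ler_norm_sum _ _ _) _.
apply: ler_sum => j _.
by rewrite /tte !normrM !normrX !normfV !normr_nat.
Qed.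

End ExpId.
Arguments Ep {K}. Arguments tte {K}.


Section CExp.
Variable R : realType.
Import ComplexField.Normc.
Local Notation C := R[i]^o.

Definition ecoef (u : C) (k : nat) : C := (k`!%:R)^-1 * u ^+ k.

Lemma cvg_realC (x : nat -> R) (a : R) :
  x @ \oo --> a -> (fun n => (x n)%:C : C) @ \oo --> (a%:C : C).
Proof.
move=> /cvgrPdist_lt H; apply/cvgrPdist_lt => e e0.
move: e0; rewrite ltcE /= => /andP[/eqP eI e0'].
have eR : e = (complex.Re e)%:C :> R[i] by case: e eI {e0'} => p q /= ->.
near=> n; rewrite eR -rmorphB /= normc_def /= expr0n /= addr0 sqrtr_sqr ltcR.
by near: n; apply: H.
Unshelve. all: by end_near. Qed.


Lemma normcX (z : R[i]) k : normc (z ^+ k) = normc z ^+ k.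
Proof. by elim: k => [|k IH]; rewrite ?expr0 ?normc1 // !exprS normcM IH. Qed.

Lemma normc_nat k : normc (k%:R : R[i]) = k%:R.
Proof. by rewrite normcMn (normc1 R). Qed.

Lemma normc_ecoef u k : normc (ecoef u k) = exp_coeff (normc u) k.
Proof.
by rewrite /ecoef /exp_coeff /= normcM normcV normc_nat normcX mulrC.
Qed.

Lemma Re_le_normc (z : R[i]) : `|complex.Re z| <= normc z.
Proof.
case: z => a b /=; rewrite -sqrtr_sqr ler_wsqrtr // lerDl sqr_ge0 //.
Qed.

Lemma Im_le_normc (z : R[i]) : `|complex.Im z| <= normc z.
Proof.
case: z => a b /=; rewrite -sqrtr_sqr ler_wsqrtr // lerDr sqr_ge0 //.
Qed.

Lemma Re_series (f : nat -> R[i]) n :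
  complex.Re (series f n) = series (fun k => complex.Re (f k)) n.
Proof.
rewrite /series /=; elim: n => [|n IH]; first by rewrite !big_geq.
by rewrite !big_nat_recr //= -IH; case: (\sum_(0 <= i < n) f i) => ? ?; case: (f n).
Qed.

Lemma Im_series (f : nat -> R[i]) n :
  complex.Im (series f n) = series (fun k => complex.Im (f k)) n.
Proof.
rewrite /series /=; elim: n => [|n IH]; first by rewrite !big_geq.
by rewrite !big_nat_recr //= -IH; case: (\sum_(0 <= i < n) f i) => ? ?; case: (f n).
Qed.

Lemma cvg_partRe (f : nat -> R) (b : nat -> R) :
  (forall k, `|f k| <= b k) -> cvgn (series b) -> cvgn (series f).
Proof.
move=> fb cb; apply: normed_cvg.
apply: (series_le_cvg _ _ fb cb) => // k.
exact: le_trans (fb k).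
Qed.

Lemma ecoef_cvg (u : C) : cvgn (series (ecoef u)).
Proof.
have hb := is_cvg_series_exp_coeff (normc u).
have hRe : cvgn (series (fun k => complex.Re (ecoef u k))).
  by apply: (@cvg_partRe _ _ _ hb) => k; rewrite -normc_ecoef; exact: Re_le_normc.
have hIm : cvgn (series (fun k => complex.Im (ecoef u k))).
  by apply: (@cvg_partRe _ _ _ hb) => k; rewrite -normc_ecoef; exact: Im_le_normc.
have E : series (ecoef u) = (fun n => (series (fun k => complex.Re (ecoef u k)) n)%:C
   + 'i *: (series (fun k => complex.Im (ecoef u k)) n)%:C : C).
  by apply/funext => n; rewrite -Re_series -Im_series; case: (series _ n) => p q /=;
    apply/eqP; rewrite eq_complex /= !(mul0r, mul1r, subr0, addr0, add0r, subrr) !eqxx.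
rewrite E; apply/cvg_ex; eexists; apply: cvgD.
  apply: cvg_realC; exact: hRe.
apply: (cvgZ (cvg_cst _)); apply: cvg_realC; exact: hIm.
Qed.


Lemma cexp_cvg (u : C) : (fun n => Ep n u) @ \oo --> (cexp u : C).
Proof. exact: ecoef_cvg. Qed.

Lemma Ep_real (x : R) n : Ep n ((x%:C : R[i]) : C) = (Ep n x)%:C.
Proof.
rewrite /Ep rmorph_sum; apply: eq_bigr => k _.
by rewrite rmorphM rmorphXn fmorphV rmorph_nat.
Qed.

Lemma Ep_cvgR (x : R) : (fun n => Ep n x) @ \oo --> expR x.
Proof.
have -> : (fun n => Ep n x) = series (exp_coeff x).
  apply/funext => n; rewrite /Ep /series /=; apply: eq_bigr => k _.
  by rewrite /exp_coeff /= mulrC.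
exact: is_cvg_series_exp_coeff.
Qed.

Lemma normC_real (z : C) : `|z| = ((normc z)%:C : R[i]).
Proof. by rewrite normc_def; case: z. Qed.

Lemma normCD (a b : C) : `|a| + `|b| = ((normc a + normc b)%:C : R[i]).
Proof. by rewrite !normC_real rmorphD. Qed.

Lemma squeeze0 (z : nat -> C) (r : nat -> R) :
  (forall n, `|z n| <= ((r n)%:C : R[i])) -> r @ \oo --> 0 -> z @ \oo --> 0.
Proof.
move=> zr /cvgrPdist_lt H; apply/cvgrPdist_lt => e e0.
move: e0; rewrite ltcE /= => /andP[/eqP eI e0'].
have eR : e = (complex.Re e)%:C :> R[i] by case: e eI {e0'} => p q /= ->.
near=> n; rewrite sub0r normrN; apply: (le_lt_trans (zr n)).
rewrite eR ltcR; apply: le_lt_trans (ler_norm _) _.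
by near: n; apply: filterS (H _ e0') => n; rewrite sub0r normrN.
Unshelve. all: by end_near. Qed.

Lemma cexpD (a b : C) : cexp (a + b) = cexp a * cexp b.
Proof.
set r := fun n => Ep n (normc a) * Ep n (normc b) - Ep n (normc a + normc b).
have hr : r @ \oo --> 0.
  have := cvgB (cvgM (Ep_cvgR (normc a)) (Ep_cvgR (normc b))) (Ep_cvgR (normc a + normc b)).
  by rewrite expRD subrr => h; apply: h.
have hD : (fun n => Ep n a * Ep n b - Ep n (a + b)) @ \oo --> 0.
  apply: (@squeeze0 _ r _ hr) => n /=.
  have -> : ((r n)%:C : R[i]) = Ep n `|a| * Ep n `|b| - Ep n (`|a| + `|b|).
    rewrite normCD !normC_real !Ep_real.
    by rewrite /r rmorphB rmorphM.
  exact: diff_norm.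
have h1 : (fun n => Ep n a * Ep n b) @ \oo --> (cexp a * cexp b : C).
  by apply: cvgM; exact: cexp_cvg.
have h2 : (fun n => Ep n (a + b)) @ \oo --> (cexp a * cexp b - 0 : C).
  have -> : (fun n => Ep n (a + b)) = (fun n => Ep n a * Ep n b - (Ep n a * Ep n b - Ep n (a + b))).
    by apply/funext => n; rewrite subKr.
  exact: cvgB h1 hD.
rewrite subr0 in h2.
exact: (cvg_unique _ (cexp_cvg (a + b)) h2).
Qed.

Lemma cexp_lim (u : C) (l : C) : (fun n => Ep n u) @ \oo --> l -> cexp u = l.
Proof. by move=> h; exact: (cvg_unique _ (cexp_cvg u) h). Qed.

Lemma cexp0 : cexp (0 : C) = 1.
Proof.
have E n : Ep n.+1 (0 : C) = 1.
  rewrite /Ep big_nat_recl //= big1 ?addr0 ?expr0 ?mulr1 ?invr1 //.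
  by move=> i _; rewrite expr0n /= mulr0.
apply: cexp_lim; rewrite -cvg_shiftS; apply: cvg_near_cst; near=> n; exact: E.
Unshelve. all: by end_near. Qed.

Lemma cexp_neq0 (u : C) : cexp u != 0.
Proof.
apply/negP => /eqP h; have := cexpD u (- u).
by rewrite subrr cexp0 h mul0r; move/eqP; rewrite oner_eq0.
Qed.

Lemma cexp1_neq1 : cexp (1 : C) != 1.
Proof.
have h : cexp (1 : C) = ((expR (1 : R))%:C : R[i]).
  apply: cexp_lim; have -> : (fun n => Ep n (1 : C)) = (fun n => (Ep n (1 : R))%:C : C).
    by apply/funext => n; rewrite -Ep_real.
  exact: cvg_realC (Ep_cvgR 1).
rewrite h; apply/negP; rewrite eq_complex /= => /andP[/eqP e1 _].
by move: (pexpR_gt1 (@ltr01 R)); rewrite e1 ltxx.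
Qed.

End CExp.


Section MExp.
Variable R : realType.
Local Notation C := R[i]^o.
Local Notation M2 := 'M[R[i]]_2.
Definition MN : normedModType R[i] := 'M[R[i]]_2.

Lemma mx_cvg_entries (S : nat -> MN) (M : MN) :
  (forall i j, (fun n => (S n i j : C)) @ \oo --> (M i j : C)) -> S @ \oo --> M.
Proof.
move=> H; apply/cvg_ballP => e e0.
have : \forall n \near \oo, forall i j, `|M i j - S n i j| < e.
  apply: filter_forall => i; apply: filter_forall => j.
  exact: (proj1 (cvgrPdist_lt _ _) (H i j) e e0).
by apply: filterS => n hn; split => // i j; exact: hn i j.
Qed.

Lemma mexp_entries (A M : M2) :
  (forall i j, (fun n => \sum_(0 <= k < n) (k`!%:R)^-1 * (A ^+ k) i j : C) @ \oo --> (M i j : C)) ->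
  mexp A = M.
Proof.
move=> H.
have hl : (series (fun k => (k`!%:R)^-1 *: A ^+ k) : nat -> MN) @ \oo --> (M : MN).
  apply: mx_cvg_entries => i j.
  have -> : (fun n => (series (fun k => (k`!%:R)^-1 *: A ^+ k) n) i j : C) =
    (fun n => \sum_(0 <= k < n) (k`!%:R)^-1 * (A ^+ k) i j : C).
    by apply/funext => n; rewrite /series /= summxE; apply: eq_bigr => k _; rewrite mxE.
  exact: H.
exact: (cvg_lim (@norm_hausdorff _ MN) hl).
Qed.


Definition phi (l d : R[i]) : R[i] :=
  if d == 0 then cexp l else (cexp (l + d) - cexp l) / d.

Fixpoint pp (l d : R[i]) (k : nat) : R[i] :=
  if k is k'.+1 then l ^+ k' + (l + d) * pp l d k' else 0.

Lemma pow_syl1 (l d : R[i]) (N : M2) k : N * N = d *: N ->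
  (l *: 1 + N) ^+ k = (l ^+ k) *: 1 + pp l d k *: N.
Proof.
move=> hN; elim: k => [|k IH]; first by rewrite expr0 /= scale0r addr0 scale1r.
rewrite exprSr IH /= mulrDl !mulrDr.
rewrite -!scalerAl !mul1r -!scalerAr !mulr1 hN !scalerA.
rewrite -addrA; congr (_ + _); first by rewrite exprSr.
by rewrite -!scalerDl; congr (_ *: _); ring.
Qed.

Lemma scalar_mx_1 (l : R[i]) : l%:M = l *: (1 : M2).
Proof. by rewrite -scalemx1. Qed.

Lemma pow_syl (l d : R[i]) (N : M2) k : N * N = d *: N ->
  (l%:M + N) ^+ k = (l ^+ k)%:M + pp l d k *: N.
Proof. by move=> hN; rewrite !scalar_mx_1 (pow_syl1 _ _ _ _ hN). Qed.

Lemma pp_neq0 (l d : R[i]) k : d != 0 -> pp l d k = ((l + d) ^+ k - l ^+ k) / d.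
Proof.
move=> d0; elim: k => [|k IH] /=; first by rewrite !expr0 subrr mul0r.
by rewrite IH !exprS; field.
Qed.

Lemma pp_0 (l : R[i]) k : pp l 0 k.+1 = k.+1%:R * l ^+ k.
Proof.
elim: k => [|k IH]; first by rewrite /= mulr0 addr0 mul1r.
have -> : pp l 0 k.+2 = l ^+ k.+1 + (l + 0) * pp l 0 k.+1 by [].
rewrite IH addr0 !exprS; rewrite -[in RHS](addn1 k.+1) natrD; ring.
Qed.

Lemma shift_cvg (u v : nat -> C) (a : C) :
  (forall n, u n.+1 = v n) -> v @ \oo --> a -> u @ \oo --> a.
Proof.
move=> uv hv; rewrite -cvg_shiftS.
suff -> : [sequence u n.+1]_n = v by [].
by apply/funext => n; exact: uv.
Qed.

Lemma Q_cvg (l d : R[i]) :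
  (fun n => \sum_(0 <= k < n) (k`!%:R)^-1 * pp l d k : C) @ \oo --> (phi l d : C).
Proof.
rewrite /phi; case: eqP => [->|/eqP d0].
  apply: (@shift_cvg _ (fun n => Ep n l)); last exact: cexp_cvg.
  move=> n; rewrite big_nat_recl // [X in X + _]/= mulr0 add0r /Ep.
    apply: eq_bigr => k _; rewrite pp_0 factS natrM.
    have h1 : (k.+1%:R : R[i]) != 0 by rewrite pnatr_eq0.
    have h2 : (k`!%:R : R[i]) != 0 by rewrite pnatr_eq0 -lt0n fact_gt0.
    by field; rewrite h2 addrC natr1 h1.
have -> : (fun n => \sum_(0 <= k < n) (k`!%:R)^-1 * pp l d k : C) =
    (fun n => (Ep n (l + d) - Ep n l) * d^-1).
  apply/funext => n; rewrite /Ep -sumrB big_distrl /=; apply: eq_bigr => k _.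
  by rewrite pp_neq0 //; ring.
apply: cvgMl; apply: cvgB; exact: cexp_cvg.
Qed.

Lemma mexp_syl (l d : R[i]) (N : M2) : N * N = d *: N ->
  mexp (l%:M + N) = (cexp l)%:M + phi l d *: N.
Proof.
move=> hN; apply: mexp_entries => i j.
have -> : (fun n => \sum_(0 <= k < n) (k`!%:R)^-1 * ((l%:M + N) ^+ k) i j : C) =
    (fun n => Ep n l *+ (i == j) + (\sum_(0 <= k < n) (k`!%:R)^-1 * pp l d k) * N i j).
  apply/funext => n; rewrite /Ep -sumrMnl big_distrl -big_split /=.
  apply: eq_bigr => k _; rewrite (pow_syl _ _ _ _ hN) !mxE mulrDr mulrnAr mulrA.
  by [].
rewrite !mxE; apply: cvgD; last by apply: cvgMl; exact: Q_cvg.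
case: (i == j); rewrite ?mulr1n ?mulr0n; first exact: cexp_cvg.
exact: cvg_cst.
Qed.

End MExp.


Set Implicit Arguments.
Unset Strict Implicit.
Unset Printing Implicit Defensive.

Section Alg2.
Variable K : fieldType.
Local Notation M2 := 'M[K]_2.

Definition D2 (A : M2) : K := A ord0 ord0 * A ord_max ord_max - A ord0 ord_max * A ord_max ord0.
Definition adj2 (A : M2) : M2 :=
  \matrix_(i, j) (if i == ord0 then (if j == ord0 then A ord_max ord_max else - A ord0 ord_max)
                  else (if j == ord0 then - A ord_max ord0 else A ord0 ord0)).

Lemma ord2_cases (i : 'I_2) : i = ord0 \/ i = ord_max.
Proof. by case: i => -[|[|k]] Hi; [left; apply: val_inj | right; apply: val_inj | ]. Qed.

Lemma lift00 : lift ord0 (ord0 : 'I_1) = (ord_max : 'I_2).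
Proof. exact: val_inj. Qed.

Lemma mul2E (A B : M2) i j : (A * B) i j = A i ord0 * B ord0 j + A i ord_max * B ord_max j.
Proof. by rewrite -mulmxE !mxE big_ord_recl big_ord_recl big_ord0 addr0 lift00. Qed.

Lemma tr2E (A : M2) : \tr A = A ord0 ord0 + A ord_max ord_max.
Proof. by rewrite /mxtrace big_ord_recl big_ord_recl big_ord0 addr0 lift00. Qed.

Lemma mxD2 (A B : M2) i j : (A + B) i j = A i j + B i j.
Proof. by rewrite mxE. Qed.
Lemma mxN2 (A : M2) i j : (- A) i j = - A i j.
Proof. by rewrite mxE. Qed.
Lemma mxB2 (A B : M2) i j : (A - B) i j = A i j - B i j.
Proof. by rewrite !mxE. Qed.

Ltac ent := let i := fresh "i" in let j := fresh "j" in apply/matrixP => i j;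
  case: (ord2_cases i) => ->; case: (ord2_cases j) => ->;
  do ![rewrite mul2E | rewrite tr2E | rewrite mxB2 | rewrite mxD2 | rewrite mxN2 | rewrite mxE];
  rewrite /= ?big_ord_recl ?big_ord0 ?lift00 ?mulr1n ?mulr0n ?addr0 /=.

Lemma CH2 (A : M2) : A * A = \tr A *: A - (D2 A)%:M.
Proof. rewrite /D2; ent; ring. Qed.


Lemma polar2 (A B : M2) :
  A * B + B * A = \tr A *: B + \tr B *: A + (\tr (A * B) - \tr A * \tr B)%:M.
Proof. ent; ring. Qed.

Lemma adjL (A : M2) : adj2 A * A = (D2 A)%:M.
Proof. rewrite /D2 /adj2; ent; ring. Qed.

Lemma adjR (A : M2) : A * adj2 A = (D2 A)%:M.
Proof. rewrite /D2 /adj2; ent; ring. Qed.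

Lemma smx_mul (a : K) (B : M2) : a%:M * B = a *: B.
Proof. by rewrite -mulmxE mul_scalar_mx. Qed.

Lemma mul_smx (a : K) (B : M2) : B * a%:M = a *: B.
Proof. by rewrite -mulmxE mul_mx_scalar. Qed.

Lemma D0_left (A B : M2) : A * B = 0 -> B != 0 -> D2 A = 0.
Proof.
move=> AB B0; have : (D2 A)%:M * B = 0 by rewrite -adjL -mulrA AB mulr0.
by rewrite smx_mul => /eqP; rewrite scaler_eq0 (negbTE B0) orbF => /eqP.
Qed.

Lemma D0_right (A B : M2) : A * B = 0 -> A != 0 -> D2 B = 0.
Proof.
move=> AB A0; have : A * (D2 B)%:M = 0 by rewrite -adjR mulrA AB mul0r.
by rewrite mul_smx => /eqP; rewrite scaler_eq0 (negbTE A0) orbF => /eqP.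
Qed.

Lemma smx_eq0 (a : K) : (a%:M : M2) = 0 -> a = 0.
Proof. by move/matrixP => /(_ ord0 ord0); rewrite !mxE. Qed.

Lemma comm_smx (a b : K) (P : M2) : (a%:M + b *: P) * P = P * (a%:M + b *: P).
Proof. by rewrite mulrDl mulrDr smx_mul mul_smx -scalerAl -scalerAr. Qed.

Lemma indep (P Q : M2) (a b c : K) : P * Q != Q * P ->
  a%:M + b *: P + c *: Q = 0 -> [/\ a = 0, b = 0 & c = 0].
Proof.
move=> nc E.
have c0 : c = 0.
  case: (eqVneq c 0) => [//|c0]; exfalso; move/eqP: nc; apply.
  have hQ : Q = - c^-1 *: (a%:M + b *: P).
    apply: (scalerI c0); rewrite scalerA mulrN divff // scaleN1r.
    by apply/eqP; rewrite -addr_eq0 addrC E.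
  by rewrite hQ -scalerAl -scalerAr comm_smx.
move: E; rewrite c0 scale0r addr0 => E.
have b0 : b = 0.
  case: (eqVneq b 0) => [//|b0]; exfalso; move/eqP: nc; apply.
  have hP : P = - b^-1 *: a%:M.
    apply: (scalerI b0); rewrite scalerA mulrN divff // scaleN1r.
    by apply/eqP; rewrite -addr_eq0 addrC E.
  by rewrite hP -scalerAl -scalerAr smx_mul mul_smx.
move: E; rewrite b0 scale0r addr0 => /smx_eq0 a0.
by [].
Qed.

Lemma comm_inv (X Y : M2) (k : K) : X * Y = k%:M -> k != 0 -> Y * X = k%:M.
Proof.
move=> XY k0.
have h : X *m (k^-1 *: Y) = 1%:M.
  by rewrite -scalemxAr mulmxE XY scale_scalar_mx mulVf.
have := mulmx1C h; rewrite -scalemxAl mulmxE => /(congr1 (fun M => k *: M)).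
by rewrite scalerA divff // scale1r => ->; rewrite scalemx1.
Qed.


Lemma smxN (a : K) : (- a)%:M = - (a%:M : M2).
Proof. by apply/matrixP => i j; rewrite !mxE mulNrn. Qed.

Lemma identN (t c : K) (F G : M2) :
  (t *: F + G - c%:M) * (t *: F + G - c%:M) =
  (t * t) *: (F * F) + t *: (F * G) + t *: (G * F) + G * G
  - (2%:R * c * t) *: F - (2%:R * c) *: G + (c * c)%:M.
Proof. ent; ring. Qed.

Lemma identN2 (t s u : K) (F G : M2) :
  (t * t) *: (s *: F) + t *: (0 : M2) + t *: (s *: G + u *: F + (- (s * u))%:M) + u *: G
  - (2%:R * (t * s) * t) *: F - (2%:R * (t * s)) *: G + ((t * s) * (t * s))%:M =
  (u - t * s) *: (t *: F + G - (t * s)%:M).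
Proof. ent; ring. Qed.

Lemma ident1 (x p1 p2 p3 t c : K) (F G : M2) :
  (x%:M + p3 *: (t *: F + G - c%:M)) - (1 + p1 *: (t *: F)) * (1 + p2 *: G) =
  (x - p3 * c - 1)%:M + (p3 * t - p1 * t) *: F + (p3 - p2) *: G - (p1 * t * p2) *: (F * G).
Proof. ent; ring. Qed.

Lemma ident2 (x y z al be ga de : K) (P Q : M2) :
  (x%:M + y *: P + z *: Q) - (al%:M + be *: P) * (ga%:M + de *: Q) =
  (x - al * ga)%:M + (y - be * ga) *: P + (z - al * de) *: Q - (be * de) *: (P * Q).
Proof. ent; ring. Qed.

Lemma ident3 (y z : K) (P Q : M2) :
  (P - z%:M) * (Q - y%:M) = P * Q - y *: P - z *: Q + (z * y)%:M.
Proof. ent; ring. Qed.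

Lemma ident4 (y z : K) (P Q : M2) :
  (P - z%:M) * (Q - y%:M) - (Q - y%:M) * (P - z%:M) = P * Q - Q * P.
Proof. ent; ring. Qed.

Lemma ident5 (t a b : K) (f g : M2) :
  t *: f + g = (t * a + b)%:M + (t *: (f - a%:M) + (g - b%:M)).
Proof. ent; ring. Qed.

Lemma ident6 (t a : K) (f : M2) : t *: f = (t * a)%:M + t *: (f - a%:M).
Proof. ent; ring. Qed.

Lemma ident7 (a : K) (f : M2) : f = a%:M + (f - a%:M).
Proof. ent; ring. Qed.

Lemma ident8 (l z : K) (N : M2) : (l%:M + N) - (l + z)%:M = N - z%:M.
Proof. ent; ring. Qed.

Lemma ident9 (t l : K) (N : M2) : t *: (l%:M + N) = (t * l)%:M + t *: N.
Proof. ent; ring. Qed.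

Lemma ident10 (t l l' : K) (N N' : M2) :
  t *: (l%:M + N) + (l'%:M + N') = (t * l + l')%:M + (t *: N + N').
Proof. ent; ring. Qed.

Lemma ident11 (a b : K) (N : M2) :
  a%:M + b *: N = (a - b * 0)%:M + b *: N.
Proof. by rewrite mulr0 subr0. Qed.

Lemma ident12 (l l' : K) (N N' : M2) :
  (l%:M + N) * (l'%:M + N') - (l'%:M + N') * (l%:M + N) = N * N' - N' * N.
Proof. ent; ring. Qed.

Lemma identM (t : K) (F G : M2) :
  (t *: F + G) * (t *: F + G) = (t * t) *: (F * F) + t *: (F * G) + t *: (G * F) + G * G.
Proof. ent; ring. Qed.

Lemma ident13 (p q t : K) (F G : M2) :
  (p%:M + p *: (t *: F)) * (q%:M + q *: G) =
  (p * q)%:M + (p * q) *: (t *: F + G) + (p * q * t) *: (F * G).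
Proof. ent; ring. Qed.

Lemma ident14 (t u : K) (F G : M2) :
  (t * t) *: (0 : M2) + t *: (0 : M2) + t *: (u *: F) + u *: G = u *: (t *: F + G).
Proof. ent; ring. Qed.

Lemma ident15 (c p l : K) (A : M2) :
  c%:M + p *: (A - l%:M) = (c - p * l)%:M + p *: A.
Proof. ent; ring. Qed.

Lemma ident16 (X Y Z : K) (N N' : M2) :
  N * N' - Y *: N - Z *: N' + (Z * Y)%:M = (X + Z * Y)%:M + (N * N' - (X%:M + Y *: N + Z *: N')).
Proof. ent; ring. Qed.

End Alg2.


Arguments phi {R}.
Arguments mexp_syl {R}.

Ltac ent := let i := fresh "i" in let j := fresh "j" in apply/matrixP => i j;
  case: (ord2_cases i) => ->; case: (ord2_cases j) => ->;
  do ![rewrite mul2E | rewrite tr2E | rewrite mxB2 | rewrite mxD2 | rewrite mxN2 | rewrite mxE];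
  rewrite /= ?big_ord_recl ?big_ord0 ?lift00 ?mulr1n ?mulr0n ?addr0 /=.

Section Main.
Variable R : realType.
Local Notation M2 := 'M[R[i]]_2.

Lemma cexpD' (a b : R[i]) : cexp (a + b) = cexp a * cexp b.
Proof. exact: cexpD. Qed.
Lemma cexp0' : cexp (0 : R[i]) = 1.
Proof. exact: cexp0. Qed.
Lemma cexp_neq0' (a : R[i]) : cexp a != 0.
Proof. exact: cexp_neq0. Qed.
Lemma cexp1_neq1' : cexp (1 : R[i]) != 1.
Proof. exact: cexp1_neq1. Qed.

Lemma phi_0 (l : R[i]) : phi l 0 = cexp l.
Proof. by rewrite /phi eqxx. Qed.

Lemma phi_nz (l d : R[i]) : d != 0 -> phi l d = (cexp (l + d) - cexp l) / d.
Proof. by move=> d0; rewrite /phi (negbTE d0). Qed.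

Lemma phiU (c u : R[i]) : Uset u -> phi c u = cexp c.
Proof.
case=> u0 hu; rewrite phi_nz // cexpD' hu.
by field.
Qed.

Lemma decomp (A : M2) : exists l d, (A - l%:M) * (A - l%:M) = d *: (A - l%:M).
Proof.
set T := \tr A; set D := D2 A.
set s := sqrtc (T ^+ 2 - 4%:R * D).
have hs : s ^+ 2 = T ^+ 2 - 4%:R * D by rewrite sqr_sqrtc.
set l := (T + s) / 2%:R.
have h2 : (2%:R : R[i]) != 0 by rewrite pnatr_eq0.
have hl : l ^+ 2 - T * l + D = 0.
  have -> : l ^+ 2 - T * l + D = (s ^+ 2 - T ^+ 2) / 4%:R + D.
    by rewrite /l; field.
  by rewrite hs; field.
exists l, (T - 2%:R * l).
have key : (A - l%:M) * (A - l%:M) - (T - 2%:R * l) *: (A - l%:M) =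
   - (l ^+ 2 - T * l + D)%:M.
  rewrite /T /D /D2; ent; ring.
by apply/eqP; rewrite -subr_eq0 key hl -scalemx1 scale0r oppr0.
Qed.


End Main.


Section Main.
Variable R : realType.
Local Notation M2 := 'M[R[i]]_2.
Lemma smxD (a b : R[i]) : (a + b)%:M = a%:M + b%:M :> M2.
Proof. by apply/matrixP => i j; rewrite !mxE mulrnDl. Qed.

Lemma mexp_shift' (c l d : R[i]) (N : M2) : N * N = d *: N ->
  mexp (c%:M + (l%:M + N)) = cexp c *: mexp (l%:M + N).
Proof.
move=> hN; rewrite addrA -smxD !(mexp_syl _ _ _ hN).
rewrite scalerDr scale_scalar_mx scalerA cexpD'.
congr (_ + _ *: _).
rewrite /phi; case: eqP => _; first by rewrite cexpD'.
rewrite -addrA !cexpD'; move: (cexp c) (cexp l) (cexp (l + d)) => x y z.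
by ring.
Qed.

Lemma mexp_shift (c : R[i]) (A : M2) : mexp (c%:M + A) = cexp c *: mexp A.
Proof.
have [l [d hN]] := decomp A.
by have := mexp_shift' c l hN; rewrite [l%:M + _]addrC subrK.
Qed.

Lemma scalar_mx0' : (0 : R[i])%:M = 0 :> M2.
Proof. by rewrite -scalemx1 scale0r. Qed.

Lemma mexp_nil (t s : R[i]) (F : M2) : F * F = s *: F ->
  mexp (t *: F) = 1 + phi 0 (t * s) *: (t *: F).
Proof.
move=> hF.
have hN : (t *: F) * (t *: F) = (t * s) *: (t *: F).
  by rewrite -scalerAl -scalerAr hF !scalerA; congr (_ *: _); ring.
by rewrite -[in LHS](add0r (t *: F)) -scalar_mx0' (mexp_syl _ _ _ hN) cexp0'.
Qed.

Lemma alg_e (e : R[i]) : (e * e - 1) / 2%:R = e - 1 -> e = 1.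
Proof.
move=> k2.
have two0 : (2%:R : R[i]) != 0 by rewrite pnatr_eq0.
have h : (e * e - 1) = (e - 1) * 2%:R.
  by have := congr1 (fun x => x * 2%:R) k2; rewrite /= divfK.
have : (e - 1) ^+ 2 = 0.
  have -> : (e - 1) ^+ 2 = (e * e - 1) - (e - 1) * 2%:R by ring.
  by rewrite h subrr.
by move/eqP; rewrite expf_eq0 /= subr_eq0 => /eqP.
Qed.

Lemma phase2 (F G : M2) : F * G = 0 -> F * G != G * F ->
  (forall t, mexp (t *: F + G) = mexp (t *: F) * mexp G) -> F * F = 0 /\ Uset (\tr G).
Proof.
move=> FG nc H.
have F0 : F != 0 by apply: contraNneq nc => ->; rewrite mul0r mulr0.
have G0 : G != 0 by apply: contraNneq nc => ->; rewrite mul0r mulr0.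
have DF : D2 F = 0 := D0_left FG G0.
have DG : D2 G = 0 := D0_right FG F0.
have FF : F * F = \tr F *: F by rewrite CH2 DF scalar_mx0' subr0.
have GG : G * G = \tr G *: G by rewrite CH2 DG scalar_mx0' subr0.
have GF : G * F = \tr F *: G + \tr G *: F + (- (\tr F * \tr G))%:M.
  by have := polar2 F G; rewrite FG add0r mxtrace0 sub0r.
move: FF GG GF; move: (\tr F) (\tr G) => s u FF GG GF.
have key : forall t, t != 0 -> phi 0 (t * s) = phi 0 u.
  move=> t t0.
  have eF := mexp_nil t FF.
  have eG : mexp G = 1 + phi 0 u *: G.
    by have := mexp_nil 1 GG; rewrite !scale1r mul1r.
  have hN : (t *: F + G - (t * s)%:M) * (t *: F + G - (t * s)%:M) =
      (u - t * s) *: (t *: F + G - (t * s)%:M).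
    by rewrite identN FF FG GF GG identN2.
  have eM : mexp (t *: F + G) =
      (cexp (t * s))%:M + phi (t * s) (u - t * s) *: (t *: F + G - (t * s)%:M).
    by have := mexp_syl (t * s) (u - t * s) _ hN; rewrite [(t * s)%:M + _]addrC subrK.
  have := ident1 (cexp (t * s)) (phi 0 (t * s)) (phi 0 u) (phi (t * s) (u - t * s)) t (t * s) F G.
  rewrite -eM -eF -eG H subrr FG scaler0 subr0 => /esym /(indep nc) [_ h1 h2].
  move/eqP: h2; rewrite subr_eq0 => /eqP h2.
  move/eqP: h1; rewrite subr_eq0 h2 => /eqP h1.
  by apply: (mulIf t0); rewrite -h1.
case: (eqVneq s 0) => s0.
  split; first by rewrite FF s0 scale0r.
  have u0 : u != 0.
    apply: contraNneq nc => u0; rewrite GF FG s0 u0 !scale0r mul0r oppr0 scalar_mx0'.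
    by rewrite !addr0.
  split => //.
  have := key 1 (oner_neq0 _); rewrite mul1r s0 phi_0 cexp0' phi_nz // add0r cexp0' => k.
  have h : (cexp u - 1) / u * u = 1 * u by rewrite -k.
  rewrite divfK // mul1r in h.
  by apply/eqP; rewrite addrC -subr_eq h.
exfalso.
have k1 := key s^-1 (invr_neq0 s0); rewrite mulVf // in k1.
have two0 : (2%:R : R[i]) != 0 by rewrite pnatr_eq0.
have k2 := key (2%:R / s) (mulf_neq0 two0 (invr_neq0 s0)); rewrite divfK // -k1 in k2.
rewrite !phi_nz ?oner_neq0 // !add0r cexp0' in k2.
have e2 : cexp (2%:R : R[i]) = cexp 1 * cexp 1 by rewrite -cexpD'.
rewrite e2 divr1 in k2.
exact: (negP (cexp1_neq1' R)) (introT eqP (alg_e k2)).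
Qed.

End Main.


Section Main.
Variable R : realType.
Local Notation M2 := 'M[R[i]]_2.

Lemma exp_lin (A : M2) : exists a b, mexp A = a%:M + b *: A.
Proof.
have [l [d hN]] := decomp A.
exists (cexp l - phi l d * l), (phi l d).
have := mexp_syl l d _ hN; rewrite [l%:M + _]addrC subrK => ->.
by rewrite ident15.
Qed.

Lemma shiftH (f g : M2) (a b : R[i]) :
  (forall t, mexp (t *: f + g) = mexp (t *: f) * mexp g) ->
  forall t, mexp (t *: (f - a%:M) + (g - b%:M)) = mexp (t *: (f - a%:M)) * mexp (g - b%:M).
Proof.
move=> H t.
have e1 : mexp (t *: f) = cexp (t * a) *: mexp (t *: (f - a%:M)).
  by rewrite -mexp_shift -ident6.
have e2 : mexp g = cexp b *: mexp (g - b%:M).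
  by rewrite -mexp_shift -ident7.
have := H t; rewrite (ident5 t a b f g) mexp_shift e1 e2.
rewrite -scalerAl -scalerAr scalerA -cexpD'.
exact: (scalerI (cexp_neq0' _)).
Qed.

Lemma step1 (f g : M2) : f * g != g * f ->
  (forall t, mexp (t *: f + g) = mexp (t *: f) * mexp g) ->
  exists sig tau, (f - sig%:M) * (g - tau%:M) = 0.
Proof.
move=> nc H.
have [l [d]] := decomp f; move Ndef : (f - l%:M) => N hN.
have hf : f = l%:M + N by rewrite -Ndef addrC subrK.
have [l' [d']] := decomp g; move N'def : (g - l'%:M) => N' hN'.
have hg : g = l'%:M + N' by rewrite -N'def addrC subrK.
have ncN : N * N' != N' * N.
  apply: contra_neq nc => c; apply/eqP; rewrite -subr_eq0 hf hg ident12 c subrr.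
  by [].
have [t0 [t0n0 hc]] : exists t0 : R[i], t0 != 0 /\ phi (t0 * l) (t0 * d) != 0.
  case: (eqVneq d 0) => d0.
    exists 1; split; first exact: oner_neq0.
    by rewrite d0 mulr0 phi_0 cexp_neq0'.
  exists d^-1; split; first by rewrite invr_neq0.
  rewrite mulVf // phi_nz ?oner_neq0 // divr1 cexpD' -[X in _ - X]mulr1 -mulrBr.
  by rewrite mulf_neq0 ?cexp_neq0' // subr_eq0 (cexp1_neq1' R).
have hN0 : (t0 *: N) * (t0 *: N) = (t0 * d) *: (t0 *: N).
  by rewrite -scalerAl -scalerAr hN !scalerA; congr (_ *: _); ring.
have eF : mexp (t0 *: f) = (cexp (t0 * l))%:M + (phi (t0 * l) (t0 * d) * t0) *: N.
  by rewrite hf ident9 (mexp_syl _ _ _ hN0) scalerA.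
have eG : mexp g = (cexp l')%:M + phi l' d' *: N' by rewrite hg (mexp_syl _ _ _ hN').
have [a [b eM]] := exp_lin (t0 *: f + g).
have eM' : mexp (t0 *: f + g) = (a + b * (t0 * l + l'))%:M + (b * t0) *: N + b *: N'.
  rewrite eM hf hg ident10.
  by move: (t0 * l + l') => w; ent; ring.
have := H t0; rewrite eM' eF eG => E.
have Z := ident2 (a + b * (t0 * l + l')) (b * t0) b (cexp (t0 * l))
  (phi (t0 * l) (t0 * d) * t0) (cexp l') (phi l' d') N N'.
rewrite E subrr in Z.
move: Z E hc; move: (a + b * (t0 * l + l')) (cexp (t0 * l)) (phi (t0 * l) (t0 * d)) (cexp l') (phi l' d') (cexp_neq0' l') => x al ph ga de ga0 Z E hc.
have be0 : ph * t0 != 0 by rewrite mulf_neq0.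
move: Z be0; move: (ph * t0) => be Z be0.
case: (eqVneq de 0) => de0.
  move: Z; rewrite de0 !mulr0 scale0r subr0 subr0 => /esym Z.
  have [_ hy hz] := indep ncN Z.
  move: hy; rewrite hz mul0r sub0r => /eqP; rewrite oppr_eq0 mulf_eq0 (negbTE be0) (negbTE ga0).
  by [].
move/eqP: Z; rewrite eq_sym subr_eq0 => /eqP Z.
have bd0 : be * de != 0 by rewrite mulf_neq0.
have PQ : N * N' = ((be * de)^-1 * (x - al * ga))%:M + ((be * de)^-1 * (b * t0 - be * ga)) *: N
    + ((be * de)^-1 * (b - al * de)) *: N'.
  have := congr1 (fun M => (be * de)^-1 *: M) Z; rewrite /= scalerA mulVf // scale1r => <-.
  by rewrite !scalerDr scale_scalar_mx !scalerA.
move: PQ; move: ((be * de)^-1 * (x - al * ga)) ((be * de)^-1 * (b * t0 - be * ga)) ((be * de)^-1 * (b - al * de)) => X Y Zc PQ.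
have E3 : (N - Zc%:M) * (N' - Y%:M) = (X + Zc * Y)%:M.
  by rewrite ident3 (ident16 X) PQ subrr addr0.
case: (eqVneq (X + Zc * Y) 0) => k0.
  exists (l + Zc), (l' + Y).
  by rewrite hf hg !ident8 E3 k0 scalar_mx0'.
exfalso; have E4 := comm_inv E3 k0.
have := ident4 Y Zc N N'; rewrite E3 E4 subrr => /esym/eqP; rewrite subr_eq0.
by rewrite (negbTE ncN).
Qed.

Lemma bwd (f g : M2) (sig tau : R[i]) :
  f - sig%:M != 0 -> (f - sig%:M) * (f - sig%:M) = 0 ->
  (f - sig%:M) * (g - tau%:M) = 0 -> Uset (\tr (g - tau%:M)) ->
  f * g != g * f /\ forall t, mexp (t *: f + g) = mexp (t *: f) * mexp g.
Proof.
move=> F0 FF FG hU.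
have hf := ident7 sig f; have hg := ident7 tau g.
move: F0 FF FG hU hf hg; move: (f - sig%:M) (g - tau%:M) => F G F0 FF FG hU hf hg.
have DF : D2 F = 0 := D0_left FF F0.
have DG : D2 G = 0 := D0_right FG F0.
have hs : \tr F = 0.
  have := CH2 F; rewrite FF DF scalar_mx0' subr0 => /esym/eqP.
  by rewrite scaler_eq0 (negbTE F0) orbF => /eqP.
have GF : G * F = \tr G *: F.
  have := polar2 F G; rewrite FG mxtrace0 hs scale0r mul0r subrr scalar_mx0'.
  by rewrite !add0r !addr0.
have GG : G * G = \tr G *: G by rewrite CH2 DG scalar_mx0' subr0.
have hU' := hU; case: hU => u0 hu.
move: GF GG u0 hu hU'; move: (\tr G) => u GF GG u0 hu hU.
split.
  apply/negP => /eqP c.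
  have : F * G - G * F = 0 by rewrite -(ident12 sig tau F G) -hf -hg c subrr.
  rewrite FG GF sub0r => /eqP; rewrite oppr_eq0 scaler_eq0 (negbTE u0) (negbTE F0).
  by [].
move=> t.
have hM : (t *: F + G) * (t *: F + G) = u *: (t *: F + G).
  by rewrite identM FF FG GF GG ident14.
have hN0 : (t *: F) * (t *: F) = 0 *: (t *: F).
  by rewrite -scalerAl -scalerAr FF !scaler0 scale0r.
rewrite hf hg ident10 (mexp_syl _ _ _ hM) (phiU _ hU).
rewrite ident9 (mexp_syl _ _ _ hN0) phi_0 (mexp_syl _ _ _ GG) (phiU _ hU).
rewrite ident13 FG scaler0 addr0 -cexpD'.
by [].
Qed.

End Main.

Theorem theorem2 (R : realType) (f g : 'M[R[i]]_2) :
  (f *m g != g *m f /\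
   forall t : R[i], mexp (t *: f + g) = mexp (t *: f) *m mexp g)
  <->
  (exists sigma tau : R[i],
     let ft := f - sigma%:M in
     let gt := g - tau%:M in
     [/\ ft != 0, ft *m ft = 0, ft *m gt = 0 & Uset (\tr gt)]).
Proof.
split.
  case=> nc H; rewrite mulmxE in nc.
  have H' : forall t : R[i], mexp (t *: f + g) = mexp (t *: f) * mexp g.
    by move=> t; rewrite H mulmxE.
  have [sig [tau E]] := step1 nc H'.
  exists sig, tau => ft gt; rewrite /ft /gt !mulmxE.
  have nc' : (f - sig%:M) * (g - tau%:M) != (g - tau%:M) * (f - sig%:M).
    apply: contra_neq nc => c; apply/eqP; rewrite -subr_eq0 -(ident4 tau sig) c subrr.
    by [].
  have [FF hU] := phase2 E nc' (shiftH sig tau H').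
  split => //.
  by apply: contraNneq nc' => ->; rewrite mul0r mulr0.
case=> sig [tau] h.
have [F0 FF FG hU] : [/\ f - sig%:M != 0, (f - sig%:M) * (f - sig%:M) = 0,
    (f - sig%:M) * (g - tau%:M) = 0 & Uset (\tr (g - tau%:M))].
  by move: h => /= [? ? ? ?]; rewrite -!mulmxE.
have [nc H] := bwd F0 FF FG hU.
split; first by rewrite mulmxE.
by move=> t; rewrite mulmxE; exact: H.
Qed.
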